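(* Let $A\subseteq\mathbb{R}^d$ be a connected open set and $B\subseteq\mathbb{R}^d$ a bounded open set with $C^1$ boundary such that $\partial B\subseteq A$ and such that the boundary of each connected component of $B$ is connected. Then $A\setminus\overline B$ is connected. *)

(* Defs.v *)
From HB Require Import structures.
From mathcomp Require Import all_boot all_order all_algebra.
From mathcomp Require Import all_classical all_reals all_analysis.
Set Implicit Arguments. Unset Strict Implicit. Unset Printing Implicit Defensive.
Import Order.TTheory GRing.Theory Num.Theory.
Import numFieldNormedType.Exports.
Local Open Scope classical_set_scope.
Local Open Scope ring_scope.

Definition boundary {T : topologicalType} (S : set T) : set T :=
  closure S `\` interior S.

Definition C1_fun {R : realType} (d : nat) (f : 'rV[R]_d -> R) : Prop :=
  (forall x, differentiable f x) /\
  (forall v : 'rV[R]_d, continuous (fun x => 'd f x v)).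

Definition orthogonal_mx {R : realType} (d : nat) (M : 'M[R]_d) : Prop :=
  M *m M^T = 1%:M.

(* The open set B has C^1 boundary: near every boundary point p, after an
   orthogonal change of coordinates y = (x - p) M, B is the region strictly
   below the graph of a C^1 function gamma of the remaining d-1 coordinates
   (gamma is represented as a C^1 function on R^d that does not depend on the
   distinguished coordinate j). *)
Definition C1_boundary {R : realType} (d : nat) (B : set 'rV[R]_d) : Prop :=
  forall p, boundary B p ->
  exists (U : set 'rV[R]_d) (M : 'M[R]_d) (j : 'I_d) (gamma : 'rV[R]_d -> R),
    [/\ open U /\ U p, orthogonal_mx M, C1_fun gamma,
        (forall y y' : 'rV[R]_d, (forall i, i != j -> y 0 i = y' 0 i) ->
           gamma y = gamma y') &
        B `&` U = [set x | U x /\ ((x - p) *m M) 0 j < gamma ((x - p) *m M)]].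

(* Main.v *)
Require Import Defs.
From HB Require Import structures.
From mathcomp Require Import all_boot all_order all_algebra.
From mathcomp Require Import all_classical all_reals all_analysis.
Import Order.TTheory GRing.Theory Num.Theory.
Import numFieldNormedType.Exports.
Local Open Scope classical_set_scope.
Local Open Scope ring_scope.
From mathcomp Require Import lra ring.
Set Implicit Arguments. Unset Strict Implicit. Unset Printing Implicit Defensive.
Section Generic.
Context {T : topologicalType}.

Lemma clopen_all (K H : set T) : connected K -> H `<=` K -> H !=set0 ->
  (forall x, H x -> exists2 V, open V & V x /\ K `&` V `<=` H) ->
  (forall x, K x -> ~ H x -> exists2 V, open V & V x /\ (forall y, K y -> V y -> ~ H y)) ->
  H = K.
Proof.
move=> cK HK H0 hO hC; apply: cK => //.
- exists (\bigcup_(V in [set V | open V /\ K `&` V `<=` H]) V).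
    by apply: bigcup_open => V [].
  apply/seteqP; split=> x.
    move=> Hx; split; first exact: HK.
    by have [V oV [Vx KVH]] := hO x Hx; exists V.
  by move=> [Kx [V [_ KVH] Vx]]; exact: KVH.
- exists (~` \bigcup_(V in [set V | open V /\ (forall y, K y -> V y -> ~ H y)]) V).
    by apply: open_closedC; apply: bigcup_open => V [].
  apply/seteqP; split=> x.
    move=> Hx; split; first exact: HK.
    by move=> [V [_ VH] Vx]; exact: (VH x (HK _ Hx) Vx).
  move=> [Kx nV]; apply: contrapT => nHx.
  have [V oV [Vx VH]] := hC x Kx nHx; apply: nV; exists V => //.
Qed.

End Generic.
Section Generic2.
Context {T : topologicalType}.
Implicit Types A B N P : set T.

Lemma bdE B : open B -> boundary B = closure B `\` B.
Proof. by move=> oB; rewrite /boundary (interior_id B).1. Qed.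

Lemma open_nbhsP N (p : T) : open N -> N p -> nbhs p N.
Proof. by move=> oN Np; apply: open_nbhs_nbhs; split. Qed.

Lemma comp_open B x :
  (forall y, B y -> exists V, [/\ open V, V y, V `<=` B & connected V]) ->
  open (connected_component B x).
Proof.
move=> hloc; rewrite openE => y Cy.
have By := connected_component_sub Cy.
have [V [oV Vy VB cV]] := hloc y By.
rewrite /interior /=; move: (open_nbhsP oV Vy); apply: filterS => z Vz.
rewrite (same_connected_component Cy).
exact: (connected_component_max Vy VB cV).
Qed.

Lemma closure_openI B N (p : T) : closure B p -> open N -> N p ->
  closure (N `&` B) p.
Proof.
move=> cBp oN Np W pW.
have := cBp (N `&` W) (filterI (open_nbhsP oN Np) pW).
by move=> [z [Bz [Nz Wz]]]; exists z.
Qed.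

Lemma comp_bd B x z :
  (forall y, B y -> exists V, [/\ open V, V y, V `<=` B & connected V]) ->
  open B -> boundary (connected_component B x) z -> boundary B z.
Proof.
move=> hloc oB; rewrite (bdE (comp_open x hloc)) (bdE oB) => -[cCz nCz]; split.
  exact: (closureS (@connected_component_sub _ B x)).
move=> Bz; apply: nCz.
have [w [Cw Czw]] := cCz _ (open_nbhsP (comp_open z hloc) (connected_component_refl Bz)).
rewrite (same_connected_component Cw) -(same_connected_component Czw).
exact: connected_component_refl.
Qed.

End Generic2.
Section Generic3.
Context {T : topologicalType}.
Implicit Types A B N P : set T.

Definition good A B N (p : T) :=
  [/\ open N, N p, N `<=` A, connected (N `\` closure B) &
      connected (N `&` B) /\ closure (N `\` closure B) p].

Theorem generic_main A B :
  open A -> connected A -> open B ->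
  boundary B `<=` A ->
  (forall x, B x -> connected (boundary (connected_component B x))) ->
  (forall y, B y -> exists V, [/\ open V, V y, V `<=` B & connected V]) ->
  (forall p, closure B p -> ~ B p -> exists N, good A B N p) ->
  connected (A `\` closure B).
Proof.
move=> oA cA oB bdA cbd hloc hgood.
set S := A `\` closure B.
have oS : open S by apply: openI => //; apply: closed_openC; exact: closed_closure.
move=> P P0 [U1 oU1 PE] [C cC PE'].
have PS : P `<=` S by rewrite PE => ? [].
have oP : open P by rewrite PE; exact: openI.
set Q := S `\` P.
have oQ : open Q.
  have -> : Q = S `&` ~` C.
    apply/seteqP; split => x [Sx nPx]; split => //.
      by move=> Cx; apply: nPx; rewrite PE'.
    by rewrite PE' => -[].
  by apply: openI => //; exact: closed_openC.
have dich : forall K, connected K -> K `<=` S ->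
    K `<=` P \/ (forall z, K z -> ~ P z).
  move=> K cK KS.
  have [[z [Kz Pz]]|nKP] := pselect (K `&` P !=set0); last first.
    by right => z Kz Pz; apply: nKP; exists z.
  left.
  have KP : K `&` P = K.
    apply: cK; first by exists z.
    - by exists P.
    - exists C => //; rewrite PE'; apply/seteqP; split => w [Kw].
        by move=> [_ Cw].
      by move=> Cw; split => //; split => //; exact: KS.
  by move=> w Kw; rewrite -KP in Kw; case: Kw.
have goodS : forall N p, good A B N p -> N `\` closure B `<=` S.
  by move=> N p [_ _ NA _ _] w [Nw nw]; split => //; exact: NA.
have hE : forall N1 p1 N2 p2, good A B N1 p1 -> good A B N2 p2 -> N1 p2 ->
    (N1 `\` closure B `<=` P <-> N2 `\` closure B `<=` P).
  move=> N1 p1 N2 p2 g1 g2 N1p2.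
  have [Ho1 _ _ c1 _] := g1; have [_ _ _ c2 [_ cl2]] := g2.
  have [z [[N2z nclz] N1z]] := cl2 N1 (open_nbhsP Ho1 N1p2).
  split=> sub.
    have Pz : P z by apply: sub; split.
    have [//|nP] := dich _ c2 (goodS _ _ g2).
    by exfalso; apply: (nP z).
  have Pz : P z by apply: sub; split.
  have [//|nP] := dich _ c1 (goodS _ _ g1).
  by exfalso; apply: (nP z).
pose L q := exists N, good A B N q /\ N `\` closure B `<=` P.
have keyL : forall N p q, good A B N p -> N q -> closure B q -> ~ B q ->
    (L q <-> N `\` closure B `<=` P).
  move=> N p q g Nq cBq nBq; split.
    by move=> [N' [g' sub]]; apply/(hE _ _ _ _ g g' Nq).
  move=> sub; have [Nq' gq] := hgood q cBq nBq.
  by exists Nq'; split => //; apply/(hE _ _ _ _ g gq Nq).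
have bdP : forall x, boundary B x -> closure B x /\ ~ B x.
  by move=> x; rewrite (bdE oB).
have Lconst : forall K, connected K -> K `<=` boundary B ->
    forall q q', K q -> K q' -> L q -> L q'.
  move=> K cK KB q q' Kq Kq' Lq.
  suff : K `&` L = K by move=> KL; rewrite -KL in Kq'; case: Kq'.
  apply: clopen_all; [exact: cK| by move=> ? []| by exists q| |].
  - move=> x [Kx Lx]; have [cx nx] := bdP x (KB _ Kx).
    have [Nx gx] := hgood x cx nx.
    have [HoNx Nxx _ _ _] := gx.
    exists Nx => //; split => // y [Ky Ny]; split => //.
    have [cy ny] := bdP y (KB _ Ky).
    by apply/(keyL _ _ _ gx Ny cy ny); apply/(keyL _ _ _ gx Nxx cx nx).
  - move=> x Kx nLx; have [cx nx] := bdP x (KB _ Kx).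
    have [Nx gx] := hgood x cx nx.
    have [HoNx Nxx _ _ _] := gx.
    exists Nx => //; split => // y Ky Ny [_ Ly]; apply: nLx; split => //.
    have [cy ny] := bdP y (KB _ Ky).
    by apply/(keyL _ _ _ gx Nxx cx nx); apply/(keyL _ _ _ gx Ny cy ny).
have bdcomp : forall N x y, good A B N x -> closure B x -> ~ B x -> N y -> B y ->
    boundary (connected_component B y) x.
  move=> N x y [HoN Nx _ _ [cNB _]] cBx nBx Ny By.
  rewrite (bdE (comp_open y hloc)); split; last first.
    by move/connected_component_sub.
  have : closure (N `&` B) x.
    exact: closure_openI.
  apply: closureS; apply: connected_component_max; [exact: (conj Ny By)| by move=> ? []| exact: cNB].
pose H := [set x | A x /\ (P x \/ (boundary B x /\ L x) \/
  (B x /\ exists2 q, boundary (connected_component B x) q & L q))].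
have HA : H = A.
  apply: clopen_all; [exact: cA | by move=> ? [] |
    by have [z Pz] := P0; exists z; split; [exact: (PS _ Pz).1 | left] | |].
  - move=> x [Ax [Px|[[bx Lx]|[Bx [q bq Lq]]]]].
    + by exists P => //; split => // y [Ay Py]; split => //; left.
    + have [cx nx] := bdP x bx.
      have [N [gN sub]] := Lx.
      have [HoN Nx NA _ _] := gN.
      exists N => //; split => // y [Ay Ny]; split => //.
      have [Byc|nByc] := pselect (closure B y); last by left; apply: sub.
      have [By|nBy] := pselect (B y).
        right; right; split => //; exists x => //.
        exact: (bdcomp N x y gN cx nx Ny By).
      right; left; split; first by rewrite (bdE oB).
      by apply/(keyL _ _ _ gN Ny Byc nBy).
    + exists (connected_component B x); first exact: comp_open.
      split; first exact: connected_component_refl.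
      move=> y [Ay Cy]; split => //; right; right.
      split; first exact: (connected_component_sub Cy).
      by exists q => //; rewrite -(same_connected_component Cy).
  - move=> x Ax nHx.
    have [Bxc|nBxc] := pselect (closure B x); last first.
      have nPx : ~ P x by move=> Px; apply: nHx; split => //; left.
      exists Q => //; split; first by split => //.
      move=> y Ay [[_ nBy] nPy] [_ [Py|[[bdy _]|[By _]]]] //.
        by apply: nBy; exact: (bdP y bdy).1.
      by apply: nBy; exact: subset_closure.
    have [Bx|nBx] := pselect (B x); last first.
      have nLx : ~ L x.
        by move=> Lx; apply: nHx; split => //; right; left; split => //; rewrite (bdE oB).
      have [N gN] := hgood x Bxc nBx.
      have [HoN Nx NA cN _] := gN.
      exists N => //; split => // y Ay Ny [_ [Py|[[bdy Ly]|[By [q bq Lq]]]]].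
      + have nBy : ~ closure B y by have [] := PS _ Py.
        have [sub|nP] := dich _ cN (goodS _ _ gN).
          by apply: nLx; exists N.
        by apply: (nP y).
      + have [cy ny] := bdP y bdy.
        by apply: nLx; exists N; split => //; apply/(keyL _ _ _ gN Ny cy ny).
      + apply: nLx; apply: (Lconst _ (cbd y By) _ q x) => //.
          by move=> z; apply: comp_bd.
        exact: (bdcomp N x y gN Bxc nBx Ny By).
    exists (connected_component B x); first exact: comp_open.
    split; first exact: connected_component_refl.
    move=> y Ay Cy [_ [Py|[[bdy _]|[By [q bq Lq]]]]].
    + by have [_ ncy] := PS _ Py; apply: ncy; apply: subset_closure;
        exact: (connected_component_sub Cy).
    + by apply: (bdP y bdy).2; exact: (connected_component_sub Cy).
    + apply: nHx; split => //; right; right; split => //.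
      by exists q => //; rewrite (same_connected_component Cy).
apply/seteqP; split => // x Sx.
have : H x by rewrite HA; exact: Sx.1.
move=> [_ [Px|[[bx _]|[Bx _]]]] //.
  by exfalso; apply: Sx.2; exact: (bdP x bx).1.
by exfalso; apply: Sx.2; exact: subset_closure.
Qed.
End Generic3.
Section MxTop.
Variable R : realType.

Lemma mx_continuous (T : topologicalType) m n (f : T -> 'M[R]_(m, n)) :
  (forall i j, continuous (fun x => f x i j)) -> continuous f.
Proof.
move=> fc x A /nbhs_ballP [e e0 eA].
have : \forall y \near x, forall ij : 'I_m * 'I_n,
    ball (f x ij.1 ij.2) e (f y ij.1 ij.2).
  apply: filter_forall => ij; exact: (fc ij.1 ij.2 x _ (nbhsx_ballx _ _ e0)).
apply: filterS => y H; apply: eA; split => // i j; exact: (H (i, j)).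
Qed.

Lemma sum_continuous (T : topologicalType) (I : Type) (r : seq I)
  (F : I -> T -> R) :
  (forall i, continuous (F i)) -> continuous (fun x => \sum_(i <- r) F i x).
Proof.
move=> Fc; elim: r => [|i r IH].
  have -> : (fun x : T => \sum_(i <- [::]) F i x) = fun=> 0.
    by apply: funext => x; rewrite big_nil.
  exact: cst_continuous.
have -> : (fun x : T => \sum_(k <- i :: r) F k x) =
   (F i + (fun x => \sum_(k <- r) F k x)).
  by apply: funext => x; rewrite big_cons.
by move=> x; apply: continuousD; [exact: Fc | exact: IH].
Qed.

Lemma affine_continuous d (p : 'rV[R]_d) (M : 'M[R]_d) (q : 'rV[R]_d) :
  continuous (fun x : 'rV[R]_d => (x - p) *m M + q).
Proof.
apply: mx_continuous => i k.
have -> : (fun x : 'rV[R]_d => ((x - p) *m M + q) i k) =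
  (fun x => \sum_(l <- index_enum 'I_d) ((x i l - p i l) * M l k) + q i k).
  by apply: funext => x; rewrite !mxE; congr (_ + _); apply: eq_bigr => l _; rewrite !mxE.
move=> x; apply: continuousD; last exact: cst_continuous.
apply: sum_continuous => l y.
have h1 : {for y, continuous (fun y : 'rV[R]_d => y i l - p i l)}.
  have h2 := @coord_continuous R 1 d i l y.
  exact: (continuousD h2 (@cst_continuous _ _ (- p i l) y)).
exact: (continuousM h1 (@cst_continuous _ _ (M l k) y)).
Qed.

Lemma rV_ballE d (c y : 'rV[R]_d) e : 0 < e ->
  ball c e y <-> forall i, `|c 0 i - y 0 i| < e.
Proof.
move=> e0; split.
  by move=> [_ H] i; have := H 0 i; rewrite -ball_normE.
move=> H; split => // a i; rewrite (ord1 a) -ball_normE; exact: H.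
Qed.

End MxTop.
Section Seg.
Variables (R : realType) (V : normedModType R).

Definition seg (a b : V) : set V := [set a + t *: (b - a) | t in `[0, 1]].

Lemma seg_connected (a b : V) : connected (seg a b).
Proof.
apply: connected_continuous_connected; first exact: segment_connected.
apply: continuous_subspaceT => t.
apply: (continuousD (@cst_continuous _ _ a t)).
exact: (continuousZr_tmp (@cvg_id _ (nbhs t))).
Qed.

Lemma seg_left (a b : V) : seg a b a.
Proof. by exists 0; [rewrite /= in_itv /= lexx ler01 | rewrite scale0r addr0]. Qed.

Lemma seg_right (a b : V) : seg a b b.
Proof. by exists 1; [rewrite /= in_itv /= lexx ler01 | rewrite scale1r addrC subrK]. Qed.

Lemma path_connected (K : set V) (c : V) (top : V -> V) :
  (forall y, K y -> seg y (top y) `<=` K) ->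
  (forall y, K y -> seg (top y) c `<=` K) -> connected K.
Proof.
move=> h1 h2.
have -> : K = \bigcup_(y in K) (seg y (top y) `|` seg (top y) c).
  apply/seteqP; split => [y Ky|y [z Kz [/h1|/h2]]]; last 2 first.
  - by apply; exact: Kz.
  - by apply; exact: Kz.
  by exists y => //; left; exact: seg_left.
apply: bigcup_connected.
  by exists c => y Ky; right; exact: seg_right.
move=> y Ky; apply: connectedU; last 2 first.
- exact: seg_connected.
- exact: seg_connected.
by exists (top y); split; [exact: seg_right | exact: seg_left].
Qed.

Lemma ball_connected (c : V) e : connected (ball c e).
Proof.
apply: (@path_connected _ c id) => y yB z [t t01 <-].
  by rewrite /= subrr scaler0 addr0.
move: yB t01; rewrite -ball_normE /= in_itv /= => yB /andP[t0 t1].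
have -> : c - (y + t *: (c - y)) = (1 - t) *: (c - y).
  by rewrite scalerBl scale1r opprD addrA.
rewrite normrZ ger0_norm ?subr_ge0 //.
apply: le_lt_trans yB; rewrite ler_piMl //; first by rewrite lerBlDr lerDl.
Qed.

End Seg.
Lemma conv_lt (R : realType) (a b1 b2 t : R) :
  a < b1 -> a < b2 -> 0 <= t <= 1 -> a < b1 + t * (b2 - b1).
Proof.
move=> h1 h2 /andP[t0 t1].
have p1 : 0 <= (b1 - a) * (1 - t) by apply: mulr_ge0; lra.
have p2 : 0 <= (b2 - a) * t by apply: mulr_ge0; lra.
have e : b1 + t * (b2 - b1) - a = (b1 - a) * (1 - t) + (b2 - a) * t by ring.
have : 0 < b1 + t * (b2 - b1) - a.
  rewrite e; case: (ltrP 0 t) => tp.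
    have q : 0 < (b2 - a) * t by apply: mulr_gt0; lra.
    lra.
  have -> : t = 0 by lra.
  lra.
lra.
Qed.

Lemma conv_gt (R : realType) (a b1 b2 t : R) :
  b1 < a -> b2 < a -> 0 <= t <= 1 -> b1 + t * (b2 - b1) < a.
Proof.
move=> h1 h2 ht.
have : - a < - b1 + t * (- b2 - - b1) by apply: conv_lt => //; rewrite ltrN2.
lra.
Qed.

Lemma conv_abs (R : realType) (s b1 b2 t : R) :
  `|b1| < s -> `|b2| < s -> 0 <= t <= 1 -> `|b1 + t * (b2 - b1)| < s.
Proof.
rewrite !ltr_norml => /andP[h1 h2] /andP[h3 h4] ht.
by rewrite conv_lt ?conv_gt.
Qed.

Section Chart.
Variables (R : realType) (d : nat).
Local Notation V := 'rV[R]_d.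

Lemma ej_entry (y : V) (j i : 'I_d) c :
  (y + c *: delta_mx 0 j) 0 i = y 0 i + c * (i == j)%:R.
Proof. by rewrite !mxE eqxx. Qed.

Lemma zero_entry (i : 'I_d) : (0 : V) 0 i = 0.
Proof. by rewrite mxE. Qed.

Lemma seg_entry (a b z : V) : seg a b z ->
  exists t, 0 <= t <= 1 /\ forall i, z 0 i = a 0 i + t * (b 0 i - a 0 i).
Proof.
move=> [t t01 <-]; exists t; split; first by move: t01; rewrite /= in_itv.
by move=> i; rewrite !mxE.
Qed.

Lemma rV_ball0E (y : V) e : 0 < e -> ball 0 e y <-> forall i, `|y 0 i| < e.
Proof.
move=> e0; rewrite rV_ballE //; split => H i; have := H i;
  by rewrite zero_entry sub0r normrN.
Qed.

Lemma chart_good (A B : set V) p : open A -> open B -> boundary B `<=` A ->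
  C1_boundary B -> closure B p -> ~ B p -> exists N, good A B N p.
Proof.
move=> oA oB bdA C1B cBp nBp.
have bp : boundary B p by rewrite (bdE oB).
have [U [M [j [g [[HoU Up] orth [gd _] ind eqc]]]]] := C1B p bp.
pose phi := fun x : V => (x - p) *m M.
pose psi := fun y : V => y *m M^T + p.
pose ej : V := delta_mx 0 j.
have orth' : M^T *m M = 1%:M := mulmx1C orth.
have psiphi x : psi (phi x) = x.
  by rewrite /psi /phi -mulmxA orth mulmx1 subrK.
have phipsi y : phi (psi y) = y.
  by rewrite /phi /psi addrK -mulmxA orth' mulmx1.
have phip : phi p = 0 by rewrite /phi subrr mul0mx.
have psi0 : psi 0 = p by rewrite /psi mul0mx add0r.
have cphi : continuous phi.
  have -> : phi = (fun x => (x - p) *m M + 0) by apply: funext => x; rewrite addr0.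
  exact: affine_continuous.
have cpsi : continuous psi.
  have -> : psi = (fun y => (y - 0) *m M^T + p) by apply: funext => y; rewrite subr0.
  exact: affine_continuous.
have cg : continuous g := fun x => differentiable_continuous (gd x).
have charU x : U x -> (B x <-> phi x 0 j < g (phi x)).
  move=> Ux; split.
    by move=> Bx; have : (B `&` U) x by []; rewrite eqc => -[].
  move=> h; have : [set x | U x /\ ((x - p) *m M) 0 j < g ((x - p) *m M)] x.
    by [].
  by rewrite -eqc => -[].
have gind y t : g (y + t *: ej) = g y.
  apply: ind => i ij; rewrite ej_entry.
  by rewrite (negbTE ij) mulr0 addr0.
have nclos x : U x -> g (phi x) < phi x 0 j -> ~ closure B x.
  move=> Ux h cBx.
  pose W := U `&` phi @^-1` [set y | g y < y 0 j].
  have oW : open W.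
    apply: openI => //; apply: (continuousP _).1 => //.
    have -> : [set y : V | g y < y 0 j] =
        (fun y : V => y 0 j - g y) @^-1` [set z | 0 < z].
      by apply/seteqP; split => y /=; rewrite subr_gt0.
    apply: (continuousP _).1; last exact: open_gt.
    move=> y; apply: continuousB; [exact: coord_continuous | exact: cg].
  have [z [Bz [Uz hz]]] := cBx W (open_nbhsP oW (conj Ux h)).
  have := (charU z Uz).1 Bz.
  by rewrite /= in hz; rewrite ltNge (ltW hz).
have g0 : g 0 = 0.
  apply/eqP; rewrite eq_le; apply/andP; split.
    rewrite leNgt; apply/negP => h; apply: nBp; apply/(charU p Up).
    by rewrite phip zero_entry.
  rewrite leNgt; apply/negP => h; apply: (nclos p Up) => //.
  by rewrite phip zero_entry.
have [e e0 eB] : exists2 e : R, 0 < e & ball (0 : V) e `<=` psi @^-1` (U `&` A).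
  have h0 : nbhs (psi 0) (U `&` A).
    by rewrite psi0; apply: open_nbhsP; [exact: openI | split => //; exact: bdA].
  by have /nbhs_ballP [e e0 eB] := cpsi 0 _ h0; exists e.
have [r0 r00 r0B] : exists2 r0 : R, 0 < r0 &
    ball (0 : V) r0 `<=` g @^-1` ball (g 0) (e / 4).
  have h0 : nbhs (g 0) (ball (g 0) (e / 4)) by apply: nbhsx_ballx; lra.
  by have /nbhs_ballP [r r0 rB] := cg 0 _ h0; exists r.
pose s := e / 2.
pose r := Num.min r0 s.
have s0 : 0 < s by rewrite /s; lra.
have r0' : 0 < r by rewrite /r lt_min r00 s0.
have rs : r <= s by rewrite /r ge_min lexx orbT.
have rr0 : r <= r0 by rewrite /r ge_min lexx.
pose rad := fun i : 'I_d => if i == j then s else r.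
have rad0 i : 0 < rad i by rewrite /rad; case: ifP.
have rads i : rad i <= s by rewrite /rad; case: ifP.
pose Box := [set y : V | forall i, `|y 0 i| < rad i].
have boxball y : Box y -> ball 0 e y.
  move=> By; apply/rV_ball0E => // i; apply: (lt_le_trans (By i)).
  by apply: (le_trans (rads i)); rewrite /s; lra.
have boxg y : Box y -> `|g y| < s / 2.
  move=> By.
  pose y0 := y + (- y 0 j) *: ej.
  have gy : g y0 = g y by rewrite gind.
  have : ball (0 : V) r0 y0.
    apply/rV_ball0E => // i; rewrite ej_entry.
    have [->|ij] := eqVneq i j; first by rewrite mulr1 subrr normr0.
    rewrite mulr0 addr0; apply: (lt_le_trans (By i)).
    by rewrite /rad (negbTE ij).
  move/r0B; rewrite /= gy -ball_normE /= g0 sub0r normrN.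
  by rewrite /s; lra.
have oBox : open Box.
  rewrite openE => y By; rewrite /interior.
  have : nbhs y [set z : V | forall i, `|z 0 i| < rad i].
    apply: (@filter_forall V 'I_d (fun i z => `|z 0 i| < rad i) (nbhs y) (nbhs_filter y)) => i.
    have : open [set z : V | `|z 0 i| < rad i].
      have -> : [set z : V | `|z 0 i| < rad i] =
        (fun z : V => `|z 0 i|) @^-1` [set x | x < rad i] by [].
      apply: (continuousP _).1; last exact: open_lt.
      move=> z; apply: continuous_comp; first exact: coord_continuous.
      exact: norm_continuous.
    by move/open_nbhsP => /(_ y (By i)).
  by apply: filterS.
pose N := phi @^-1` Box.
have oN : open N by apply: (continuousP _).1.
have Box0 : Box 0 by move=> i; rewrite zero_entry normr0.
have Np : N p by rewrite /N /= phip.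
have NUA x : N x -> U x /\ A x.
  by move=> Nx; have := eB _ (boxball _ Nx); rewrite /= psiphi.
have NA : N `<=` A by move=> x /NUA [].
have charN x : N x -> (B x <-> phi x 0 j < g (phi x)).
  by move=> /NUA [Ux _]; exact: charU.
have Npsi y : Box y -> N (psi y) by move=> By; rewrite /N /= phipsi.
have pert y : Box y -> forall W, nbhs (psi y) W -> exists2 t : R, 0 < t &
    forall tau, `|tau| <= t -> W (psi (y + tau *: ej)) /\ Box (y + tau *: ej).
  move=> By W hW.
  have : nbhs y (psi @^-1` W `&` Box).
    by apply: filterI; [exact: cpsi | exact: open_nbhsP].
  move=> /nbhs_ballP [de /= de0 deB]; exists (de / 2); first lra.
  move=> tau htau; apply: deB; apply/rV_ballE => // i.
  rewrite ej_entry opprD addrA subrr sub0r normrN normrM.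
  have : `|((i == j)%:R : R)| <= 1 by case: (i == j); rewrite ?normr1 ?normr0.
  move=> h1; apply: (le_lt_trans (y := `|tau|)); last lra.
  by rewrite -[leRHS]mulr1 ler_wpM2l.
have closN x : N x -> (closure B x <-> phi x 0 j <= g (phi x)).
  move=> Nx; have [Ux _] := NUA x Nx; split.
    by move=> cBx; rewrite leNgt; apply/negP => h; exact: (nclos x Ux h).
  rewrite le_eqVlt => /orP[/eqP heq|hlt]; last first.
    by apply: subset_closure; apply/(charN x Nx).
  move=> W Wx; rewrite -(psiphi x) in Wx.
  have [t t0 ht] := pert _ Nx W Wx.
  have ht' : `|- t| <= t by rewrite normrN gtr0_norm.
  have [Wz Bz] := ht _ ht'.
  exists (psi (phi x + (- t) *: ej)); split => //.
  apply/(charN _ (Npsi _ Bz)); rewrite phipsi gind ej_entry eqxx mulr1 -heq.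
  lra.
have clp : closure (N `\` closure B) p.
  move=> W Wp; rewrite -psi0 in Wp.
  have [t t0 ht] := pert _ Box0 W Wp.
  have ht' : `|t| <= t by rewrite gtr0_norm.
  have [Wz Bz] := ht _ ht'.
  exists (psi (0 + t *: ej)); split => //; split; first exact: Npsi.
  rewrite (closN _ (Npsi _ Bz)) phipsi gind ej_entry eqxx mulr1 zero_entry g0.
  lra.
have region (Pr : R -> R -> Prop) (t0 : R) : `|t0| < s ->
    (forall y, Box y -> Pr (g y) t0) ->
    (forall a b1 b2 t, Pr a b1 -> Pr a b2 -> 0 <= t <= 1 ->
       Pr a (b1 + t * (b2 - b1))) ->
    connected [set y | Box y /\ Pr (g y) (y 0 j)].
  move=> t0s hPr conv.
  have boxconv a b z : Box a -> Box b -> seg a b z -> Box z.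
    move=> Ba Bb /seg_entry [t [t01 ze]] i; rewrite ze; exact: conv_abs.
  have topB y : Box y -> Box (y + (t0 - y 0 j) *: ej).
    move=> By i; rewrite ej_entry; have [->|ij] := eqVneq i j.
      by rewrite mulr1 addrC subrK /rad eqxx.
    by rewrite mulr0 addr0; exact: By.
  have cB : Box (0 + t0 *: ej).
    move=> i; rewrite ej_entry zero_entry add0r; have [->|ij] := eqVneq i j.
      by rewrite mulr1 /rad eqxx.
    by rewrite mulr0 normr0.
  apply: (@path_connected R V _ (0 + t0 *: ej)
            (fun y => y + (t0 - y 0 j) *: ej)).
  - move=> y [By Py] z hz.
    have Bz := boxconv _ _ _ By (topB y By) hz; split => //.
    have [t [t01 ze]] := seg_entry hz.
    have gz : g z = g y.
      apply: ind => i ij; rewrite ze ej_entry (negbTE ij) mulr0 addr0.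
      by rewrite subrr mulr0 addr0.
    rewrite gz ze ej_entry eqxx mulr1 addrAC subrr add0r.
    exact: (conv _ _ _ _ Py (hPr y By) t01).
  - move=> y [By Py] z hz.
    have Bz := boxconv _ _ _ (topB y By) cB hz; split => //.
    have [t [t01 ze]] := seg_entry hz.
    have -> : z 0 j = t0.
      by rewrite ze !ej_entry eqxx !mulr1 zero_entry add0r (addrC (y 0 j)) subrK
        subrr mulr0 addr0.
    exact: hPr.
have cRp : connected [set y | Box y /\ g y < y 0 j].
  apply: (region (fun a b => a < b) (s * 3 / 4)).
  - rewrite gtr0_norm; lra.
  - move=> y /boxg; rewrite ltr_norml => /andP[_ h]; lra.
  - by move=> a b1 b2 t; exact: conv_lt.
have cRm : connected [set y | Box y /\ y 0 j < g y].
  apply: (region (fun a b => b < a) (- (s * 3 / 4))).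
  - rewrite normrN gtr0_norm; lra.
  - move=> y /boxg; rewrite ltr_norml => /andP[h _]; lra.
  - by move=> a b1 b2 t; exact: conv_gt.
have NclE : N `\` closure B = psi @` [set y | Box y /\ g y < y 0 j].
  apply/seteqP; split.
    move=> x [Nx ncl]; exists (phi x); last exact: psiphi.
    split => //; rewrite ltNge; apply/negP => h; apply: ncl.
    exact/(closN x Nx).
  move=> _ [y [By hy] <-]; split; first exact: Npsi.
  rewrite (closN _ (Npsi _ By)) phipsi => h.
  by move: h; rewrite leNgt hy.
have NBE : N `&` B = psi @` [set y | Box y /\ y 0 j < g y].
  apply/seteqP; split.
    move=> x [Nx Bx]; exists (phi x); last exact: psiphi.
    by split => //; apply/(charN x Nx).
  move=> _ [y [By hy] <-]; split; first exact: Npsi.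
  by apply/(charN _ (Npsi _ By)); rewrite phipsi.
exists N; split => //.
  rewrite NclE; apply: connected_continuous_connected => //.
  exact: continuous_subspaceT.
split => //; rewrite NBE; apply: connected_continuous_connected => //.
exact: continuous_subspaceT.
Qed.

End Chart.
Unset Implicit Arguments. Set Strict Implicit.
Theorem lemma6 (R : realType) (d : nat) (A B : set 'rV[R]_d) :
  open A -> connected A ->
  open B -> bounded_set B -> C1_boundary B ->
  boundary B `<=` A ->
  (forall x, B x -> connected (boundary (connected_component B x))) ->
  connected (A `\` closure B).
Proof.
move=> oA cA oB _ C1B bdA cbd.
apply: generic_main => //.
  move=> y By; have /nbhs_ballP [e /= e0 eB] := open_nbhsP oB By.
  exists (ball y e); split.
  - exact: ball_open.
  - exact: ballxx.
  - exact: eB.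
  - exact: ball_connected.
by move=> p cp np; exact: chart_good.
Qed.
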